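(* Let $P_c$ be the program defined in the context, for an arbitrary ordering $\alpha$ of $X$. For every supported model $M$ of $P_c$, the digraph on $X$ with arc set $\{(p,q):\mathrm{dep}(p,q)\in M\}$ contains no directed cycle, including cycles of length $1$.
   Context: Delete-relaxed planning. Let $X$ be a finite set of atomic propositions, $A^+$ a finite set of actions, and $G\subseteq X$. Each action $\vec a\in A^+$ has $pre(\vec a),add(\vec a)\subseteq X$; there are no delete effects and the initial state is $\emptyset$. For each action $\vec a$ there is an action atom $a$. Further atoms are: - $\mathrm{dep}(p,q)$ for $p,q\in X$; - $\mathrm{ws}(a,p)$ for actions $\vec a$ and $p\in X$; - a special atom $f$. All these atoms are pairwise distinct and distinct from $X$. Logic programs. A normal rule has the form $h\leftarrow b_1,\dots,b_n,\mathtt{not}\,c_1,\dots,\mathtt{not}\,c_m$, and a choice rule has the form $\{h\}\leftarrow(\text{same body})$. An interpretation $I$ satisfies a body if all $b_i\in I$ and no $c_j\in I$. $I$ is a model if every normal rule whose body $I$ satisfies has its head in $I$. The supporting rules of $P$ w.r.t. $I$ are: - the normal rules whose body $I$ satisfies; - the choice rules whose body $I$ satisfies and whose head is in $I$. A model $I$ of $P$ is supported if $I$ is exactly the set of heads of its supporting rules. Vertex elimination. For a digraph $(V',E')$ and vertex $v$: - the fill-in is $F(v)=\{(x,y):(x,v),(v,y)\in E',x\ne y\}$; - the $v$-elimination graph deletes $v$ together with its incident arcs and adds $F(v)$. For an ordering $\alpha:\{1,\dots,n\}\to V$ of a digraph $\mathcal{G}$ with $n$ vertices, set $\mathcal{G}_0=\mathcal{G}$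 and let $\mathcal{G}_i$ be the $\alpha(i)$-elimination graph of $\mathcal{G}_{i-1}$ for $i=1,\dots,n-1$. Let $F_{i-1}(\alpha(i))$ be the fill-in of $\alpha(i)$ in $\mathcal{G}_{i-1}$. The vertex elimination graph is $\mathcal{G}^*_\alpha=(V,E^* )$, where $E^*$ is the union of the original arcs and all $F_{i-1}(\alpha(i))$. Program $P_c$. Let $E=\{(p,q)\in X\times X:\exists \vec a\in A^+,\ p\in add(\vec a),\ q\in pre(\vec a)\}$ and $\mathcal{G}=(X,E)$. Let $n=|X|$, fix an ordering $\alpha$ of $X$, and let $E^*$ be the arc set of $\mathcal{G}^*_\alpha$. $P_c$ consists of: - (C1) $\{\mathrm{dep}(p,q)\}\leftarrow q$ for each $(p,q)\in E$; - (C2) $\{\mathrm{ws}(a,p)\}\leftarrow \mathrm{dep}(p,q_1),\dots,\mathrm{dep}(p,q_k)$ for each $\vec a\in A^+$ and $p\in add(\vec a)$, where $pre(\vec a)=\{q_1,\dots,q_k\}$; - (C3) $p\leftarrow \mathrm{ws}(a,p)$ and $a\leftarrow\mathrm{ws}(a,p)$ for each $\vec a\in A^+$ and $p\in add(\vec a)$; - (C4) $g\leftarrow\mathtt{not}\,g$ for each $g\in G$; - (C5) $\mathrm{dep}(p,q)\leftarrow\mathrm{dep}(p,\alpha(i)),\mathrm{dep}(\alpha(i),q)$ for each $i\in\{1,\dots,n-1\}$ and each $(p,q)\in F_{i-1}(\alpha(i))$; - (C6) $f\leftarrow \mathrm{dep}(p,q),\mathrm{dep}(q,p),\mathtt{not}\,f$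 for all $p,q\in X$ (possibly $p=q$) with $(p,q)\in E^*$ and $(q,p)\in E^*$. *)

(* Defs.v *)
From Stdlib Require Import List Relations.
From mathcomp Require Import all_boot.
Set Implicit Arguments. Unset Strict Implicit. Unset Printing Implicit Defensive.

(** * Atoms: propositions p (AX p), action atoms a (AAct a),
    dep(p,q), ws(a,p), and the special atom f.  Pairwise distinct by
    construction. *)
Inductive atom (X A : Type) : Type :=
  | AX of X
  | AAct of A
  | Dep of X & X
  | Ws of A & X
  | Ff.

Record rule (T : Type) := mkRule {
  head : T;
  is_choice : bool;          (* true: choice rule {h} <- body ; false: normal rule *)
  pos : list T;
  neg : list T }.

Definition program (T : Type) := rule T -> Prop.
Definition interp (T : Type) := T -> Prop.

Definition sat_body T (I : interp T) (r : rule T) : Prop :=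
  (forall b, In b (pos r) -> I b) /\ (forall c, In c (neg r) -> ~ I c).

Definition is_model T (P : program T) (I : interp T) : Prop :=
  forall r, P r -> is_choice r = false -> sat_body I r -> I (head r).

Definition supporting_rule T (P : program T) (I : interp T) (r : rule T) : Prop :=
  P r /\ sat_body I r /\ (is_choice r = false \/ I (head r)).

Definition supported_model T (P : program T) (I : interp T) : Prop :=
  is_model P I /\
  (forall x, I x <-> exists r, supporting_rule P I r /\ head r = x).

Section Elim.
Variable X : finType.

Definition fill_in (E : {set X * X}) (v : X) : {set X * X} :=
  [set e | [&& (e.1, v) \in E, (v, e.2) \in E & e.1 != e.2]].

Definition elim_graph (E : {set X * X}) (v : X) : {set X * X} :=
  [set e in E :|: fill_in E v | (e.1 != v) && (e.2 != v)].

Definition elim_seq (E : {set X * X}) (s : seq X) : {set X * X} :=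
  foldl elim_graph E s.
End Elim.

Section Pc.
Variables (X A : finType) (pre add : A -> {set X}) (G : {set X}).
Variable alpha : 'I_#|X| -> X.   (* ordering, index k stands for paper's k+1 *)

Definition depE : {set X * X} :=
  [set e | [exists a : A, (e.1 \in add a) && (e.2 \in pre a)]].

Definition alpha_seq : seq X := [seq alpha i | i <- enum 'I_#|X|].

Definition Gk (k : nat) : {set X * X} := elim_seq depE (take k alpha_seq).

(** F_{i-1}(alpha(i)) for i = k+1 *)
Definition Fk (k : 'I_#|X|) : {set X * X} := fill_in (Gk k) (alpha k).

Definition Estar : {set X * X} :=
  depE :|: \bigcup_(k : 'I_#|X| | k.+1 < #|X|) Fk k.

Definition Pc : program (atom X A) := fun r =>
  (* C1 *)
  (exists p q, (p, q) \in depE /\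
     r = mkRule (Dep A p q) true [:: AX A q] [::]) \/
  (* C2 *)
  (exists a p, p \in add a /\
     r = mkRule (Ws a p) true [seq Dep A p q | q <- enum (pre a)] [::]) \/
  (* C3 *)
  (exists a p, p \in add a /\
     (r = mkRule (AX A p) false [:: Ws a p] [::] \/
      r = mkRule (AAct X a) false [:: Ws a p] [::])) \/
  (* C4 *)
  (exists g, g \in G /\ r = mkRule (AX A g) false [::] [:: AX A g]) \/
  (* C5 *)
  (exists (k : 'I_#|X|) p q, k.+1 < #|X| /\ (p, q) \in Fk k /\
     r = mkRule (Dep A p q) false [:: Dep A p (alpha k); Dep A (alpha k) q] [::]) \/
  (* C6 *)
  (exists p q, (p, q) \in Estar /\ (q, p) \in Estar /\
     r = mkRule (Ff X A) false [:: Dep A p q; Dep A q p] [:: Ff X A]).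
End Pc.

(* Main.v *)
Require Import Defs.
From Stdlib Require Import List Relations ClassicalEpsilon.
From mathcomp Require Import all_boot zify.

Section G.
Variables (X A : finType) (pre add : A -> {set X}).
Variable alpha : 'I_#|X| -> X.
Variable idx : X -> 'I_#|X|.
Hypothesis Hai : cancel alpha idx.
Hypothesis Hia : cancel idx alpha.

Local Notation n := #|X|.
Local Notation Gk := (Gk pre add alpha).

Lemma Gk0 : Gk 0 = depE pre add.
Proof. by rewrite /Gk take0. Qed.

Lemma Gk_step (k : 'I_n) : Gk k.+1 = elim_graph (Gk k) (alpha k).
Proof.
rewrite /Gk /alpha_seq (take_nth (alpha k)) ?size_map ?size_enum_ord //.
rewrite -cats1 /elim_seq foldl_cat /= (nth_map k) ?size_enum_ord // nth_ord_enum.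
by []. by rewrite -enumT size_enum_ord.
Qed.

Lemma idx_ne (x : X) (k : 'I_n) : x != alpha k -> (idx x : nat) != k.
Proof.
apply: contra => /eqP H; apply/eqP.
by rewrite -(Hia x); congr alpha; apply: val_inj.
Qed.
Arguments idx_ne {x k}.

Lemma Gk_range k : k <= n -> forall e, e \in Gk k -> k <= idx e.1 /\ k <= idx e.2.
Proof.
elim: k => [|k IH] Hk e; first by [].
have Hk' : k < n by [].
rewrite (Gk_step (Ordinal Hk')) inE /= => /andP [He /andP [H1 H2]].
have := idx_ne H1; have := idx_ne H2 => /= N2 N1.
move: He; rewrite inE => /orP [He|].
  have [A1 A2] := IH (ltnW Hk) e He.
  by split; rewrite ltn_neqAle eq_sym ?N1 ?N2.
rewrite inE => /andP [Ha /andP [Hb _]].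
have [A1 _] := IH (ltnW Hk) _ Ha; have [_ A2] := IH (ltnW Hk) _ Hb.
by split; rewrite ltn_neqAle eq_sym ?N1 ?N2 //.
Qed.

Lemma Gk_persist j d e : j + d <= n -> e \in Gk j ->
  j + d <= idx e.1 -> j + d <= idx e.2 -> e \in Gk (j + d).
Proof.
elim: d => [|d IH]; first by rewrite addn0.
rewrite addnS => Hn He H1 H2.
have Hk : j + d < n by [].
rewrite (Gk_step (Ordinal Hk)) inE /= inE IH ?(ltnW Hn) ?(ltnW H1) ?(ltnW H2) //=.
apply/andP; split; apply/eqP => E.
  by move: H1; rewrite E Hai /= ltnn.
by move: H2; rewrite E Hai /= ltnn.
Qed.

Lemma Gk_persist' j m e : j <= m -> m <= n -> e \in Gk j ->
  m <= idx e.1 -> m <= idx e.2 -> e \in Gk m.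
Proof.
move=> Hjm; rewrite -(subnKC Hjm); exact: Gk_persist.
Qed.

Lemma Estar_Gk x y : (x, y) \in Estar pre add alpha ->
  (x, y) \in Gk (minn (idx x) (idx y)).
Proof.
have Hm : minn (idx x) (idx y) <= n.
  by apply: leq_trans (geq_minl _ _) (ltnW (ltn_ord _)).
rewrite inE => /orP [He|/bigcupP [k Hk]].
  apply: (@Gk_persist' 0) => //; rewrite -?Gk0 //=.
  - by rewrite Gk0.
  - exact: geq_minl.
  - exact: geq_minr.
rewrite inE => /andP [Ha /andP [Hb Hxy]] /=.
have [A1 _] := @Gk_range k (ltnW (ltn_ord k)) _ Ha.
have [_ A2] := @Gk_range k (ltnW (ltn_ord k)) _ Hb.
rewrite /= in A1 A2.
case: (eqVneq x (alpha k)) => [Ex|Nx].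
  have -> : minn (idx x) (idx y) = k by rewrite Ex Hai; apply/minn_idPl; exact: A2.
  by rewrite Ex.
case: (eqVneq y (alpha k)) => [Ey|Ny].
  have -> : minn (idx x) (idx y) = k by rewrite Ey Hai; apply/minn_idPr; exact: A1.
  by rewrite Ey.
have B1 : k < idx x by rewrite ltn_neqAle eq_sym idx_ne.
have B2 : k < idx y by rewrite ltn_neqAle eq_sym idx_ne.
apply: (@Gk_persist' k.+1) => //.
- by rewrite leq_min B1 B2.
- by rewrite (Gk_step k) inE /= Nx Ny inE /= inE Ha Hb Hxy orbT.
- exact: geq_minl.
- exact: geq_minr.
Qed.
End G.

Section M.
Variables (X A : finType) (pre add : A -> {set X}) (G : {set X}).
Variable alpha : 'I_#|X| -> X.
Variable M : interp (atom X A).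
Hypothesis HM : supported_model (Pc pre add G alpha) M.
Local Notation n := #|X|.

Ltac casePc HP :=
  case: HP => [[p' [q' [Hpq ->]]]|[[a' [p' [Hpq ->]]]|[[a' [p' [Hpq [->|->]]]]|[[g' [Hpq ->]]|[[k' [p' [q' [Hk' [Hpq ->]]]]]|[p' [q' [Hpq [Hqp ->]]]]]]]]] /=.

Lemma noF : ~ M (Ff X A).
Proof.
move=> HF; have [_ Hs] := HM.
have [r [[HP [[_ Hneg] _]] Hh]] := (proj1 (Hs _) HF).
move: Hh Hneg; casePc HP => // _ Hneg.
by apply: (Hneg (Ff X A)) => //=; left.
Qed.

Lemma dep_Estar p q : M (Dep A p q) -> (p, q) \in Estar pre add alpha.
Proof.
move=> HD; have [_ Hs] := HM.
have [r [[HP _] Hh]] := (proj1 (Hs _) HD).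
move: Hh; casePc HP => // [[<- <-]|[<- <-]].
  by rewrite inE Hpq.
by rewrite inE; apply/orP; right; apply/bigcupP; exists k'.
Qed.

Lemma no2 p q : M (Dep A p q) -> M (Dep A q p) -> False.
Proof.
move=> H1 H2; apply: noF; have [Hm _] := HM.
apply: (Hm (mkRule (Ff X A) false [:: Dep A p q; Dep A q p] [:: Ff X A])) => //.
  do 5 right; exists p, q; split; [exact: dep_Estar|split; [exact: dep_Estar|by []]].
split.
  by move=> b /= [<-|[<-|[]]].
by move=> c /= [<-|[]]; exact: noF.
Qed.

Lemma dep_C5 (k : 'I_n) p q : k.+1 < n -> (p, q) \in Fk pre add alpha k ->
  M (Dep A p (alpha k)) -> M (Dep A (alpha k) q) -> M (Dep A p q).
Proof.
move=> Hk Hpq H1 H2; have [Hm _] := HM.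
apply: (Hm (mkRule (Dep A p q) false [:: Dep A p (alpha k); Dep A (alpha k) q] [::])) => //.
  do 4 right; left; exists k, p, q; done.
split.
  by move=> b /= [<-|[<-|[]]].
by move=> c [].
Qed.
End M.

Lemma ex_min (T : eqType) (f : T -> nat) (l : seq T) : l != [::] ->
  exists2 v, v \in l & forall u, u \in l -> f v <= f u.
Proof.
elim: l => [//|a l IH] _.
case: (eqVneq l [::]) => [->|Hl].
  by exists a; rewrite ?inE // => u; rewrite inE => /eqP ->.
have [v Hv Hmin] := IH Hl.
case: (leqP (f a) (f v)) => H.
  exists a; first by rewrite inE eqxx.
  move=> u; rewrite inE => /orP [/eqP ->//|Hu]; exact: leq_trans H (Hmin _ Hu).
exists v; first by rewrite inE Hv orbT.
move=> u; rewrite inE => /orP [/eqP ->|Hu]; [exact: ltnW|exact: Hmin].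
Qed.

Section C.
Variables (X A : finType) (pre add : A -> {set X}) (G : {set X}).
Variable alpha : 'I_#|X| -> X.
Variable idx : X -> 'I_#|X|.
Hypothesis Hai : cancel alpha idx.
Hypothesis Hia : cancel idx alpha.
Variable M : interp (atom X A).
Hypothesis HM : supported_model (Pc pre add G alpha) M.

Definition Rb (p q : X) : bool :=
  if excluded_middle_informative (M (Dep A p q)) then true else false.

Lemma RbP p q : Rb p q -> M (Dep A p q).
Proof. by rewrite /Rb; case: excluded_middle_informative. Qed.
Lemma RbI p q : M (Dep A p q) -> Rb p q.
Proof. by rewrite /Rb; case: excluded_middle_informative. Qed.

Lemma no_cycle m : forall l, size l <= m -> l != [::] -> cycle Rb l -> False.
Proof.
have N2 := @no2 X A pre add G alpha M HM.
have C5 := @dep_C5 X A pre add G alpha M HM.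
have ES := @dep_Estar X A pre add G alpha M HM.
have EG := @Estar_Gk X A pre add alpha idx Hai Hia.
elim: m => [[]//|m IH] l Hs Hl Hc.
have [v Hv Hmin] := @ex_min _ (fun u => nat_of_ord (idx u)) l Hl.
have := rot_index Hv; set s := (drop _ _ ++ _) => Hrot.
have Hc' : cycle Rb (v :: s) by rewrite -Hrot rot_cycle.
have Hs' : size (v :: s) <= m.+1 by rewrite -Hrot size_rot.
have Hmem u : u \in v :: s -> idx v <= idx u by rewrite -Hrot mem_rot; exact: Hmin.
move: Hc' Hs' Hmem; clear Hrot; clearbody s; case: s => [|y t].
  by rewrite /= andbT => /RbP H _ _; exact: (N2 _ _ H H).
case/lastP: t => [|t' x].
  by rewrite /= andbT => /andP [/RbP H1 /RbP H2] _ _; exact: (N2 _ _ H1 H2).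
rewrite /= rcons_path -cats1 cat_path /= andbT last_cat /= => /andP [/RbP Hvy /andP [Hp /RbP Hxv]].
move=> Hsz Hmem.
have Nvy : v != y by apply/eqP => E; subst y; exact: (N2 _ _ Hvy Hvy).
have Nxv : x != v by apply/eqP => E; subst x; exact: (N2 _ _ Hxv Hxv).
have Nxy : x != y by apply/eqP => E; subst x; exact: (N2 _ _ Hxv Hvy).
have Iinj : injective idx := can_inj Hia.
have Ne u w : u != w -> (idx u : nat) != idx w.
  by apply: contra => /eqP/val_inj/Iinj ->.
have Ix : idx v < idx x.
  by rewrite ltn_neqAle Ne 1?eq_sym // Hmem // !inE mem_cat inE eqxx !orbT.
have Iy : idx v < idx y.
  by rewrite ltn_neqAle Ne // Hmem // !inE eqxx orbT.
have Ixy := Ne _ _ Nxy.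
have Hk : (idx v).+1 < #|X|.
  have := ltn_ord (idx x); have := ltn_ord (idx y); move: Ixy Ix Iy; lia.
have Hxy : M (Dep A x y).
  have H := C5 (idx v) x y Hk; rewrite Hia in H; apply: H => //.
  rewrite /Fk inE /= Hia Nxy andbT.
  have := EG _ _ (ES _ _ Hxv); have := EG _ _ (ES _ _ Hvy).
  by rewrite (minn_idPr (ltnW Ix)) (minn_idPl (ltnW Iy)) => -> ->.
apply: (IH (y :: t' ++ [:: x])) => //.
rewrite /= rcons_path cat_path last_cat /= andbT Hp /=.
exact: RbI.
Qed.

End C.

Lemma ct_path (T : Type) (R : T -> T -> Prop) (Rb : rel T) :
  (forall p q, R p q -> Rb p q) ->
  forall p q, clos_trans T R p q -> exists s, s <> [::] /\ path Rb p s /\ last p s = q.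
Proof.
move=> HR p q; elim => [x y Hxy|x y z _ [s1 [N1 [P1 L1]]] _ [s2 [N2 [P2 L2]]]].
  by exists [:: y]; rewrite /= HR.
exists (s1 ++ s2); split; first by clear -N1; case: s1 N1.
by rewrite cat_path last_cat L1 P1 P2 L2.
Qed.

Theorem mainTheorem4 (X A : finType) (pre add : A -> {set X}) (G : {set X})
  (alpha : 'I_#|X| -> X) (alpha_bij : bijective alpha)
  (M : interp (atom X A)) :
  supported_model (Pc pre add G alpha) M ->
  ~ (exists p : X, clos_trans X (fun p q => M (Dep A p q)) p p).
Proof.
move=> HM [p Hp].
case: alpha_bij => idx Hai Hia.
have [s [Ns [Ps Ls]]] := @ct_path _ _ _ (@RbI X A M) _ _ Hp.
move: Ns Ps Ls; case/lastP: s => [//|s' z] _.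
rewrite last_rcons => Ps Ez; subst z.
apply: (@no_cycle X A pre add G alpha idx Hai Hia M HM (size (p :: s')) (p :: s')) => //.
Qed.
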